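(* Let $A$ be a ring of Krull dimension $d$ and let $s\in A$ be a non-zero divisor such that $\dim(A_s)\le d-1$. Then there exists a generalized dimension function $\delta:\operatorname{Spec}(A)\to\mathbb N$ such that $\delta(\mathfrak p)\le d-1$ for all $\mathfrak p\in\operatorname{Spec}(A)$ and $\delta(\mathfrak p)=\dim(A/\mathfrak p)$ for every prime $\mathfrak p$ containing $s$.
   Context: Rings are commutative Noetherian with $1\ne0$ of finite Krull dimension. For $\mathcal S\subset\operatorname{Spec}(A)$ and a function $\delta:\mathcal S\to\mathbb N$, define a partial order on $\mathcal S$ by $\mathfrak p\ll\mathfrak q$ iff $\mathfrak p\subset\mathfrak q$ and $\delta(\mathfrak p)>\delta(\mathfrak q)$. $\delta$ is called a generalized dimension function if for every ideal $I\subset A$ the set $V(I)\cap\mathcal S$ has only finitely many minimal elements with respect to $\ll$. *)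

(* Defs.v *)
From Stdlib Require List.
From HB Require Import structures.
From mathcomp Require Import all_boot all_order all_algebra.
Set Implicit Arguments. Unset Strict Implicit. Unset Printing Implicit Defensive.
Import GRing.Theory.
Local Open Scope ring_scope.

Section CommAlg.
Variable R : comNzRingType.

Definition subI (I J : R -> Prop) : Prop := forall x, I x -> J x.

Definition is_ideal (I : R -> Prop) : Prop :=
  I 0 /\ (forall x y, I x -> I y -> I (x + y)) /\ (forall r x, I x -> I (r * x)).

Definition prime_ideal (P : R -> Prop) : Prop :=
  is_ideal P /\ ~ P 1 /\ (forall a b, P (a * b) -> P a \/ P b).

Definition noetherian : Prop :=
  forall I : nat -> R -> Prop, (forall n, is_ideal (I n)) ->
    (forall n, subI (I n) (I n.+1)) ->
    exists N, forall n, (N <= n)%N -> subI (I n) (I N).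

Definition prime_chain (c : nat -> R -> Prop) (n : nat) : Prop :=
  (forall i, (i <= n)%N -> prime_ideal (c i)) /\
  (forall i, (i < n)%N -> subI (c i) (c i.+1) /\ ~ subI (c i.+1) (c i)).

Definition krull_dim (d : nat) : Prop :=
  (exists c, prime_chain c d) /\ (forall c n, prime_chain c n -> (n <= d)%N).

(* dim(R/p) = n : primes of R/p = primes of R containing p *)
Definition quot_dim (p : R -> Prop) (n : nat) : Prop :=
  (exists c, prime_chain c n /\ subI p (c 0)) /\
  (forall c m, prime_chain c m -> subI p (c 0) -> (m <= n)%N).

(* dim(R_s) <= d - 1 (with dim of the zero ring = -oo):
   primes of R_s = primes of R not containing s *)
Definition loc_dim_lt (s : R) (d : nat) : Prop :=
  forall c m, prime_chain c m -> (forall i, (i <= m)%N -> ~ c i s) -> (m < d)%N.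

Definition nonzerodivisor (s : R) : Prop := forall x, s * x = 0 -> x = 0.

Definition dd_lt (delta : (R -> Prop) -> nat) (p q : R -> Prop) : Prop :=
  subI p q /\ (delta q < delta p)%N.

Definition dd_minimal (delta : (R -> Prop) -> nat) (I p : R -> Prop) : Prop :=
  prime_ideal p /\ subI I p /\
  ~ (exists q, prime_ideal q /\ subI I q /\ dd_lt delta q p).

Definition gen_dim_fun (delta : (R -> Prop) -> nat) : Prop :=
  forall I, is_ideal I -> exists l : seq (R -> Prop),
    forall p, dd_minimal delta I p ->
      exists q, List.In q l /\ (forall x, p x <-> q x).
End CommAlg.

(* Main.v *)
Require Import Defs.
From mathcomp Require Import all_boot all_order all_algebra.
From mathcomp Require Import ring.
From Stdlib Require Import Classical ClassicalEpsilon.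
Set Implicit Arguments. Unset Strict Implicit. Unset Printing Implicit Defensive.
Import GRing.Theory.
Local Open Scope ring_scope.






Inductive prodin (R : comNzRingType) : seq (R -> Prop) -> R -> Prop :=
| pi_nil : prodin [::] 1
| pi_cons (p : R -> Prop) l a y : p a -> prodin l y -> prodin (p :: l) (a * y).

Definition good (R : comNzRingType) (I : R -> Prop) := exists l : seq (R -> Prop),
  (forall q, List.In q l -> prime_ideal q /\ subI I q) /\ (forall y, prodin l y -> I y).

Definition addI (R : comNzRingType) (I : R -> Prop) (a : R) : R -> Prop :=
  fun x => exists i r, I i /\ x = i + r * a.

Lemma addI_ideal (R : comNzRingType) (I : R -> Prop) (a : R) : is_ideal I -> is_ideal (addI I a).
Proof.
move=> [I0 [ID IM]]; split; [|split].
- by exists 0, 0; split => //; ring.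
- move=> x y [i1 [r1 [H1 ->]]] [i2 [r2 [H2 ->]]].
  exists (i1 + i2), (r1 + r2); split; [exact: ID|ring].
- move=> r x [i1 [r1 [H1 ->]]]; exists (r * i1), (r * r1); split; [exact: IM|ring].
Qed.

Lemma addI_sub (R : comNzRingType) (I : R -> Prop) (a : R) : is_ideal I -> subI I (addI I a).
Proof. by move=> _ x Ix; exists x, 0; split => //; ring. Qed.

Lemma addI_a (R : comNzRingType) (I : R -> Prop) (a : R) : is_ideal I -> addI I a a.
Proof. by move=> [I0 _]; exists 0, 1; split => //; ring. Qed.

Lemma prodin_cat (R : comNzRingType) (l1 l2 : seq (R -> Prop)) (y : R) : prodin (l1 ++ l2) y ->
  exists y1 y2, y = y1 * y2 /\ prodin l1 y1 /\ prodin l2 y2.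
Proof.
elim: l1 y => [|p l1 IH] y /=.
  by move=> H; exists 1, y; split; [ring|split => //; constructor].
move=> H; inversion H; subst.
have [y1 [y2 [-> [P1 P2]]]] := IH _ H4.
exists (a * y1), y2; split; [ring|split => //; constructor => //].
Qed.

Lemma step (R : comNzRingType) (I : R -> Prop) : is_ideal I -> ~ good I ->
  exists J, (is_ideal J /\ ~ good J) /\ subI I J /\ ~ subI J I.
Proof.
move=> HI HnI.
have HI' := HI; case: HI' => [I0 [ID IM]].
case: (classic (I 1)) => I1.
  exfalso; apply: HnI; exists [::]; split => // y Hy; by inversion Hy; subst.
case: (classic (forall a b, I (a * b) -> I a \/ I b)) => Hpr.
  exfalso; apply: HnI; exists [:: I]; split.
    by move=> q [<-|[]]; split => //; split.
  move=> y Hy; inversion Hy; subst; inversion H3; subst.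
  by rewrite mulr1.
have [a Ha] := not_all_ex_not R (fun a => forall b, I (a * b) -> I a \/ I b) Hpr.
have [b Hb] := not_all_ex_not R (fun b => I (a * b) -> I a \/ I b) Ha.
have [Hab Hn] := imply_to_and _ _ Hb.
have [Ia Ib] := not_or_and _ _ Hn.
case: (classic (good (addI I a))) => Ga; last first.
  exists (addI I a); split; [split => //; exact: addI_ideal|split; first exact: addI_sub].
  by move=> Hs; apply: Ia; apply: Hs; apply: addI_a.
case: (classic (good (addI I b))) => Gb; last first.
  exists (addI I b); split; [split => //; exact: addI_ideal|split; first exact: addI_sub].
  by move=> Hs; apply: Ib; apply: Hs; apply: addI_a.
exfalso; apply: HnI.
case: Ga => l1 [L1 P1]; case: Gb => l2 [L2 P2].
exists (l1 ++ l2); split.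
  move=> q Hq; case: (List.in_app_or _ _ _ Hq) => {}Hq.
    by have [Pq Sq] := L1 _ Hq; split => // x Ix; apply: Sq; apply: addI_sub.
  by have [Pq Sq] := L2 _ Hq; split => // x Ix; apply: Sq; apply: addI_sub.
move=> y /prodin_cat [y1 [y2 [-> [Y1 Y2]]]].
have [i1 [r1 [Ii1 ->]]] := P1 _ Y1.
have [i2 [r2 [Ii2 ->]]] := P2 _ Y2.
have -> : (i1 + r1 * a) * (i2 + r2 * b) = i1 * (i2 + r2 * b) + (r1 * a) * i2 + (r1 * r2) * (a * b) by ring.
apply ID; last exact: IM.
apply ID; last exact: IM.
by rewrite mulrC; apply: IM.
Qed.

Lemma all_good (R : comNzRingType) : noetherian R -> forall I : R -> Prop, is_ideal I -> good I.
Proof.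
move=> HN I0 HI0; apply: NNPP => Hb0.
have H : forall I : R -> Prop, exists J : R -> Prop, (is_ideal I /\ ~ good I) ->
   (is_ideal J /\ ~ good J) /\ subI I J /\ ~ subI J I.
  move=> I; case: (classic (is_ideal I /\ ~ good I)) => [[h1 h2]|hn].
    by have [J HJ] := step h1 h2; exists J.
  by exists I.
pose f (I : R -> Prop) := proj1_sig (constructive_indefinite_description _ (H I)).
have fP (I : R -> Prop) : (is_ideal I /\ ~ good I) -> (is_ideal (f I) /\ ~ good (f I)) /\ subI I (f I) /\ ~ subI (f I) I.
  exact: (proj2_sig (constructive_indefinite_description _ (H I))).
pose c n := iter n f I0.
have cb : forall n, is_ideal (c n) /\ ~ good (c n).
  elim => [|n IH]; first by split.
  by rewrite /c iterS; case: (fP _ IH).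
have [N HN'] := HN c (fun n => proj1 (cb n)) (fun n => proj1 (proj2 (fP _ (cb n)))).
have := proj2 (proj2 (fP _ (cb N))); apply.
by have := HN' N.+1 (leqnSn N); rewrite /c iterS.
Qed.







Lemma zero_ideal (R : comNzRingType) : is_ideal (fun x : R => x = 0).
Proof.
split; [done|split]; first by move=> x y -> ->; rewrite addr0.
by move=> r x ->; rewrite mulr0.
Qed.

Lemma no_minimal (R : comNzRingType) (s : R) (c0 : R -> Prop) : noetherian R -> nonzerodivisor s ->
  prime_ideal c0 -> c0 s -> (forall q, prime_ideal q -> subI q c0 -> subI c0 q) -> False.
Proof.
move=> HN Hs Hc Hcs Hmin.
have [l [L P]] := all_good HN (@zero_ideal R).
have : exists y k t, prodin l y /\ y = s ^+ k * t /\ ~ c0 t.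
  elim: l L {P} => [|q l IH] L.
    exists 1, 0%N, 1; split; first constructor.
    by split; [rewrite expr0 mulr1|case: Hc => _ []].
  have [y [k [t [Py [Ey Ht]]]]] := IH (fun q' h => L q' (or_intror h)).
  have Pq := proj1 (L q (or_introl erefl)).
  case: (classic (subI q c0)) => Hq.
    exists (s * y), k.+1, t; split; first by constructor => //; apply: Hmin.
    rewrite Ey.
    by split => //; rewrite exprS mulrA.
  have [a Ha] := not_all_ex_not _ (fun a => q a -> c0 a) Hq.
  have [qa nca] := imply_to_and _ _ Ha.
  exists (a * y), k, (a * t); split; first by constructor.
  rewrite Ey.
  split; first ring.
  by case: Hc => _ [_ Hp] /Hp [].
move=> [y [k [t [Py [Ey Ht]]]]].
have y0 := P _ Py; rewrite Ey in y0.
apply: Ht.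
have -> : t = 0.
  clear Ey Py; elim: k y0 => [|k IH]; first by rewrite expr0 mul1r.
  by rewrite exprS -mulrA => /Hs.
by case: Hc => [[]].
Qed.

Definition prepend (R : comNzRingType) (c : nat -> R -> Prop) (q : R -> Prop) :=
  fun i => if i is j.+1 then c j else q.

Lemma prepend_chain (R : comNzRingType) (c : nat -> R -> Prop) m (q : R -> Prop) : prime_chain c m -> prime_ideal q -> subI q (c 0%N) ->
  ~ subI (c 0%N) q -> prime_chain (prepend c q) m.+1.
Proof.
move=> [P S] Pq H1 H2; split.
  by case=> [|i] //= Hi; apply: P.
by case=> [|i] //= Hi; apply: S.
Qed.



Local Close Scope ring_scope.
Fixpoint best (P : nat -> Prop) (n : nat) : nat :=
  match n with
  | 0 => 0
  | n'.+1 => if excluded_middle_informative (P n'.+1) then n'.+1 else best P n'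
  end.

Lemma best_P P n : P 0 -> P (best P n).
Proof.
elim: n => [|n IH] //= H0.
by destruct (excluded_middle_informative _) => //; apply: IH.
Qed.

Lemma best_max P n m : (m <= n)%N -> P m -> (m <= best P n)%N.
Proof.
elim: n => [|n IH] /=; first by rewrite leqn0 => /eqP ->.
move=> Hm HP; destruct (excluded_middle_informative _) as [Hn|Hn] => //.
rewrite leq_eqVlt in Hm; case/orP: Hm => [/eqP Em|Hm]; first by subst m.
exact: IH.
Qed.

Definition Qd (R : comNzRingType) (p : R -> Prop) (m : nat) :=
  exists c, prime_chain c m /\ subI p (c 0%N).
Definition Qs (R : comNzRingType) (s : R) (p : R -> Prop) (m : nat) :=
  exists c, prime_chain c m /\ (forall i, (i <= m)%N -> ~ c i s) /\ c 0%N = p.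

Lemma Qd0 (R : comNzRingType) (p : R -> Prop) : prime_ideal p -> Qd p 0.
Proof. by move=> H; exists (fun _ => p); split => //; split => // i; rewrite leqn0 => /eqP ->. Qed.

Lemma Qs0 (R : comNzRingType) s (p : R -> Prop) : prime_ideal p -> ~ p s -> Qs s p 0.
Proof.
move=> H Hs; exists (fun _ => p); split; last by split => // i; rewrite leqn0 => /eqP ->.
by split => // i; rewrite leqn0 => /eqP ->.
Qed.

Lemma avoid (R : comNzRingType) (p : R -> Prop) (l : seq (R -> Prop)) : prime_ideal p ->
  (forall q, List.In q l -> ~ subI q p) -> exists y, prodin l y /\ ~ p y.
Proof.
move=> Pp; elim: l => [|q l IH] Hno.
  by exists 1%R; split; [constructor|case: Pp => _ []].
have [y [Py npy]] := IH (fun q' h => Hno q' (or_intror h)).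
have Hq := Hno q (or_introl erefl).
have [a Ha] := not_all_ex_not _ (fun a => q a -> p a) Hq.
have [qa npa] := imply_to_and _ _ Ha.
exists (a * y)%R; split; first by constructor.
by case: Pp => _ [_ Hp] /Hp [].
Qed.

Lemma contains (R : comNzRingType) (p J : R -> Prop) (l : seq (R -> Prop)) : prime_ideal p ->
  (forall y, prodin l y -> J y) -> subI J p -> exists q, List.In q l /\ subI q p.
Proof.
move=> Pp HP HJ; apply: NNPP => Hno.
have [|y [Py npy]] := @avoid _ p l Pp.
  by move=> q Hq Hs; apply: Hno; exists q.
by apply: npy; apply: HJ; apply: HP.
Qed.

Local Close Scope ring_scope.

Theorem mainTheorem3 (R : comNzRingType) (d : nat) (s : R) :
  noetherian R -> krull_dim R d -> nonzerodivisor s -> loc_dim_lt s d ->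
  exists delta : (R -> Prop) -> nat,
    gen_dim_fun delta /\
    (forall p, prime_ideal p -> (delta p < d)%N) /\
    (forall p, prime_ideal p -> p s -> quot_dim p (delta p)).
Proof.
move=> HN [_ Hkd] Hs Hloc.
pose delta (p : R -> Prop) :=
  if excluded_middle_informative (p s) then best (Qd p) d else best (Qs s p) d.
have dS p : p s -> delta p = best (Qd p) d.
  by rewrite /delta; destruct (excluded_middle_informative _).
have dN p : ~ p s -> delta p = best (Qs s p) d.
  by rewrite /delta; destruct (excluded_middle_informative _).
have primeI (p : R -> Prop) : prime_ideal p -> is_ideal p by case.
exists delta; split; [|split].
- move=> I HI.
  have [l1 [L1 P1]] := all_good HN HI.
  have [l2 [L2 P2]] := all_good HN (addI_ideal s HI).
  exists (l1 ++ l2) => p [Pp [Ip Hmin]].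
  case: (classic (p s)) => ps.
  + have Jp : subI (addI I s) p.
      move=> x [i [r [Ii ->]]]; have [_ [PD PM]] := primeI p Pp.
      by apply: PD; [apply: Ip|apply: PM].
    have [q [inq qp]] := contains Pp P2 Jp.
    exists q; split; first by apply: List.in_or_app; right.
    have [Pq Jq] := L2 q inq.
    case: (classic (subI p q)) => pq; first by move=> x; split; [apply: pq|apply: qp].
    exfalso; apply: Hmin; exists q; split => //; split.
      by move=> x Ix; apply: Jq; apply: addI_sub.
    split => //.
    have qs : q s by apply: Jq; apply: addI_a.
    rewrite dS // dS //.
    have [c [Hc pc]] := @best_P (Qd p) d (Qd0 Pp).
    set m := best (Qd p) d in Hc pc *.
    have Hc' : prime_chain (prepend c q) m.+1.
      apply: prepend_chain => //; first by move=> x /qp; apply: pc.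
      by move=> h; apply: pq => x /pc /h.
    apply: (best_max (Hkd _ _ Hc')).
    by exists (prepend c q); split => // x.
  + have [q [inq qp]] := contains Pp P1 Ip.
    exists q; split; first by apply: List.in_or_app; left.
    have [Pq Iq] := L1 q inq.
    case: (classic (subI p q)) => pq; first by move=> x; split; [apply: pq|apply: qp].
    exfalso; apply: Hmin; exists q; split => //; split => //.
    split => //.
    have qs : ~ q s by move=> /qp.
    rewrite dN // dN //.
    have [c [Hc [av c0]]] := @best_P (Qs s p) d (Qs0 Pp ps).
    set m := best (Qs s p) d in Hc av c0 *.
    have Hc' : prime_chain (prepend c q) m.+1.
      by apply: prepend_chain => //; rewrite c0.
    apply: (best_max (Hkd _ _ Hc')).
    exists (prepend c q); split => //; split => //.
    by case=> [|i] //= Hi; apply: av.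
- move=> p Pp; case: (classic (p s)) => ps.
  + rewrite dS //.
    have [c [Hc pc]] := @best_P (Qd p) d (Qd0 Pp).
    set m := best (Qd p) d in Hc pc *.
    case: (classic (exists q, prime_ideal q /\ subI q (c 0%N) /\ ~ subI (c 0%N) q)).
      move=> [q [Pq [qc nq]]].
      exact: Hkd (prepend_chain Hc Pq qc nq).
    move=> Hno; exfalso.
    apply: (no_minimal HN Hs (proj1 Hc 0%N (leq0n _)) (pc _ ps)).
    move=> q Pq qc; apply: NNPP => h; apply: Hno; exists q; split => //.
  + rewrite dN //.
    have [c [Hc [av c0]]] := @best_P (Qs s p) d (Qs0 Pp ps).
    exact: Hloc Hc av.
- move=> p Pp ps; rewrite dS //; split.
    exact: (@best_P (Qd p) d (Qd0 Pp)).
  move=> c m Hc pc; apply: (best_max (Hkd _ _ Hc)).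
  by exists c.
Qed.
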